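(* Let $c_r>0$ and $c_e>0$ be constants and let $\mu$ be a finite (nonnegative) measure on $\mathbb{R}$, where for a set $S$ of attribute values $\mu(S)$ is the (estimated) number of tuples whose value of a fixed indexed attribute $a$ lies in $S$. Consider two range conditions (candidate guards) on $a$, namely $o_x: a\in[v^x_1,v^x_2]$ and $o_y: a\in[v^y_1,v^y_2]$, coming from two different policies $P_x$ and $P_y$. Let $o_{x\oplus y}: a\in[\min(v^x_1,v^y_1),\max(v^x_2,v^y_2)]$ be their merge. Define the costs $\mathrm{cost}(P_x)=\mu([v^x_1,v^x_2])\,(c_r+c_e)$, $\mathrm{cost}(P_y)=\mu([v^y_1,v^y_2])\,(c_r+c_e)$, and $\mathrm{cost}(P_x\oplus P_y)=\mu([\min(v^x_1,v^y_1),\max(v^x_2,v^y_2)])\,(c_r+2c_e)$, and say that merging $o_x$ and $o_y$ is beneficial if $\mathrm{cost}(P_x\oplus P_y)<\mathrm{cost}(P_x)+\mathrm{cost}(P_y)$. If $[v^x_1,v^x_2]\cap[v^y_1,v^y_2]=\emptyset$, then merging $o_x$ and $o_y$ is not beneficial.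
   Context: Setting: access-control policies over a database relation are evaluated via guarded expressions. A guarded expression consists of a guard (a simple condition on an indexed attribute) together with a set (partition) of policies; its cost is modeled as $\mathrm{Card}(\text{guard})\cdot(c_r + |\text{partition}|\cdot c_e)$, where $\mathrm{Card}$ is the estimated number of tuples satisfying the guard, $c_r$ is the cost of reading one tuple and $c_e$ the cost of evaluating one policy's conditions on one tuple. A guarded expression containing a single policy $P_l$ with guard $o$ thus costs $\mathrm{Card}(o)(c_r+c_e)$, and a merged guard covering two policies costs $\mathrm{Card}(\text{merged guard})(c_r+2c_e)$. Here $\mathrm{Card}$ is modeled by the measure $\mu$. *)

(* Defs.v *)
From HB Require Import structures.
From mathcomp Require Import all_boot all_order all_algebra.
From mathcomp Require Import all_classical all_reals all_analysis.
Set Implicit Arguments. Unset Strict Implicit. Unset Printing Implicit Defensive.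
Import Order.TTheory GRing.Theory Num.Theory.
Local Open Scope classical_set_scope.
Local Open Scope ring_scope.
Local Open Scope ereal_scope.

Definition card_range (R : realType) (mu : set R -> \bar R) (v1 v2 : R) : \bar R :=
  mu `[v1, v2]%classic.

Definition cost_single (R : realType) (mu : set R -> \bar R) (cr ce : R) (v1 v2 : R) : \bar R :=
  card_range mu v1 v2 * (cr + ce)%:E.

Definition cost_merged (R : realType) (mu : set R -> \bar R) (cr ce : R)
  (v1x v2x v1y v2y : R) : \bar R :=
  card_range mu (Order.min v1x v1y) (Order.max v2x v2y) * (cr + 2 * ce)%:E.

Definition merge_beneficial (R : realType) (mu : set R -> \bar R) (cr ce : R)
  (v1x v2x v1y v2y : R) : Prop :=
  cost_merged mu cr ce v1x v2x v1y v2y < cost_single mu cr ce v1x v2x + cost_single mu cr ce v1y v2y.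

(* Main.v *)
Require Import Defs.
From HB Require Import structures.
From mathcomp Require Import all_boot all_order all_algebra.
From mathcomp Require Import all_classical all_reals all_analysis.
From mathcomp Require Import lra.
Import Order.TTheory GRing.Theory Num.Theory.
Local Open Scope classical_set_scope.
Local Open Scope ring_scope.

Theorem theorem1 (R : realType) (mu : {finite_measure set R -> \bar R})
  (cr ce : R) (hcr : 0 < cr) (hce : 0 < ce) (v1x v2x v1y v2y : R) :
  `[v1x, v2x] `&` `[v1y, v2y] = set0 ->
  ~ merge_beneficial mu cr ce v1x v2x v1y v2y.
Proof.
move=> hdis.
rewrite /merge_beneficial /cost_merged /cost_single /card_range.
set X := `[v1x, v2x]%classic.
set Y := `[v1y, v2y]%classic.
set M := `[Order.min v1x v1y, Order.max v2x v2y]%classic.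
have mX : measurable X by exact: measurable_itv.
have mY : measurable Y by exact: measurable_itv.
have mM : measurable M by exact: measurable_itv.
have sub : X `|` Y `<=` M.
  move=> z; rewrite /X /Y /M /= !in_itv /=.
  case=> /andP[h1 h2]; apply/andP; split.
  - by rewrite ge_min h1.
  - by rewrite le_max h2.
  - by rewrite ge_min h1 orbT.
  - by rewrite le_max h2 orbT.
have hle : (mu X + mu Y <= mu M)%E.
  rewrite -measureU //; apply: le_measure => //; rewrite inE //.
  exact: measurableU.
have fX : mu X \is a fin_num by exact: fin_num_measure.
have fY : mu Y \is a fin_num by exact: fin_num_measure.
have fM : mu M \is a fin_num by exact: fin_num_measure.
have gX : (0 <= fine (mu X)) by apply: fine_ge0; exact: measure_ge0.
have gY : (0 <= fine (mu Y)) by apply: fine_ge0; exact: measure_ge0.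
move: hle; rewrite -(fineK fX) -(fineK fY) -(fineK fM).
rewrite -EFinD !lee_fin -!EFinM -EFinD lte_fin => hle.
have gM : 0 <= fine (mu M) by apply: fine_ge0; exact: measure_ge0.
have h1 : fine (mu M) * (cr + ce) <= fine (mu M) * (cr + 2 * ce).
  by apply: ler_wpM2l => //; lra.
have h2 : (fine (mu X) + fine (mu Y)) * (cr + ce) <= fine (mu M) * (cr + ce).
  by apply: ler_wpM2r => //; lra.
rewrite mulrDl in h2.
apply/negP; rewrite -leNgt.
exact: le_trans h2 h1.
Qed.
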